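(* Let $N\ge2$, $t,r\ge1$, $m=t+r<N$, $K\ge N$, and let $n_0=K-(N-t)+1$. Fix $y\in(0,1]$ and, for $s\ge0$, consider the family of densities on $(0,1]$ $$g_s(x)=f_\beta(x;n_0,r,0)\,e^{-s xy}\sum_{k=0}^{n_0}\binom{n_0}{k}\frac{(r-1)!}{(r+k-1)!}[s\,y(1-x)]^k,$$ which is the conditional pdf of $p_1$ given $p_2=y$ when $\mathrm{SINR}=s$ (with $s=0$ corresponding to $H_0$). Then for every $s>0$ the likelihood ratio $g_s(x)/g_0(x)$ is a nonincreasing function of $x\in(0,1]$; consequently, conditionally on $p_2$, the test that decides $H_1$ when $p_1<\eta$ (equivalently, when $(1-p_1)/p_1>\eta'$) is uniformly most powerful for testing $\mathrm{SINR}=0$ against $\mathrm{SINR}>0$ based on $p_1$.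
   Context: $f_\beta(x;n,m,0)=\frac{(n+m-1)!}{(n-1)!(m-1)!}x^{n-1}(1-x)^{m-1}$ is the complex central beta pdf. $p_1=1/\bigl(1+\frac{m_1}{1+m_2}\bigr)$, $p_2=1/(1+m_2)$ where $m_1=\mathbf{z}_{2.3}^\dagger\mathbf{S}_{2.3}^{-1}\mathbf{z}_{2.3}$, $m_2=\mathbf{z}_3^\dagger\mathbf{S}_{33}^{-1}\mathbf{z}_3$, for the primary vector $\mathbf{z}\in\mathbb{C}^N$ partitioned into blocks of sizes $t,r,N-m$ and sample matrix $\mathbf{S}$ partitioned conformably, $\mathbf{z}_{2.3}=\mathbf{z}_2-\mathbf{S}_{23}\mathbf{S}_{33}^{-1}\mathbf{z}_3$, $\mathbf{S}_{2.3}=\mathbf{S}_{22}-\mathbf{S}_{23}\mathbf{S}_{33}^{-1}\mathbf{S}_{32}$; $(p_1,p_2)$ is the (transformed) maximal invariant of the adaptive subspace detection problem with structured interference, whose second component $p_2$ has the same distribution under both hypotheses. *)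

(* Defs.v *)
From HB Require Import structures.
From mathcomp Require Import all_boot all_order all_algebra.
From mathcomp Require Import all_classical all_reals all_analysis.
Set Implicit Arguments. Unset Strict Implicit. Unset Printing Implicit Defensive.
Import Order.TTheory GRing.Theory Num.Theory.
Local Open Scope ring_scope.
Local Open Scope classical_set_scope.

Definition fbeta (R : realType) (n m : nat) (x : R) : R :=
  ((n + m - 1)`!%:R / ((n - 1)`!%:R * (m - 1)`!%:R))
  * x ^+ (n - 1) * (1 - x) ^+ (m - 1).

Definition n0_of (K N t : nat) : nat := (K - (N - t)).+1.

Definition gdens (R : realType) (n0 r : nat) (y s x : R) : R :=
  fbeta n0 r x * expR (- (s * x * y)) *
  \sum_(k < n0.+1) ('C(n0, k)%:R * ((r - 1)`!%:R / (r + k - 1)`!%:R)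
                    * (s * y * (1 - x)) ^+ k).

Definition thr_test (R : realType) (eta : R) (x : R) : R :=
  if x < eta then 1 else 0.

(* Main.v *)
Require Import Defs.
From HB Require Import structures.
From mathcomp Require Import all_boot all_order all_algebra.
From mathcomp Require Import all_classical all_reals all_analysis.
From mathcomp Require Import measurable_realfun measurable_fun_approximation.
From mathcomp Require Import ring lra.
Import Order.TTheory GRing.Theory Num.Theory.
Local Open Scope ring_scope.
Local Open Scope classical_set_scope.

Definition ccoef {R : realType} (n0 r k : nat) : R :=
  'C(n0, k)%:R * ((r - 1)`!%:R / (r + k - 1)`!%:R).

Definition Lf {R : realType} (n0 r : nat) (y s x : R) : R :=
  expR (- (s * x * y)) *
  \sum_(k < n0.+1) ((ccoef n0 r k : R) * (s * y * (1 - x)) ^+ k).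

Lemma ccoef_ge0 (R : realType) n0 r k : 0 <= (ccoef n0 r k : R).
Proof. by rewrite /ccoef mulr_ge0 ?divr_ge0 ?ler0n. Qed.

Lemma gdensE (R : realType) n0 r (y s x : R) :
  gdens n0 r y s x = fbeta n0 r x * Lf n0 r y s x.
Proof. by rewrite /gdens /Lf mulrA. Qed.

Lemma Lf0 (R : realType) n0 r (y x : R) : Lf n0 r y 0 x = 1.
Proof.
rewrite /Lf !mul0r oppr0 expR0 mul1r big_ord_recl big1 ?addr0.
  rewrite /ccoef bin0 addn0 expr0 mulr1 mul1r divff //.
by move=> i _; rewrite expr0n /= mulr0.
Qed.

Lemma gdens0 (R : realType) n0 r (y x : R) : gdens n0 r y 0 x = fbeta n0 r x.
Proof. by rewrite gdensE Lf0 mulr1. Qed.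

Lemma fbeta_ge0 (R : realType) n m (x : R) : 0 <= x -> x <= 1 -> 0 <= fbeta n m x.
Proof.
move=> x0 x1; rewrite /fbeta mulr_ge0 ?exprn_ge0 ?subr_ge0 //.
by rewrite mulr_ge0 ?exprn_ge0 // divr_ge0 ?mulr_ge0 ?ler0n.
Qed.

Lemma fbeta_gt0 (R : realType) n m (x : R) : 0 < x -> x < 1 -> 0 < fbeta n m x.
Proof.
move=> x0 x1; rewrite /fbeta mulr_gt0 ?exprn_gt0 ?subr_gt0 //.
rewrite mulr_gt0 ?exprn_gt0 // divr_gt0 ?mulr_gt0 ?ltr0n ?fact_gt0 //.
Qed.

Lemma fbeta_le (R : realType) n m (x : R) : 0 <= x -> x <= 1 ->
  fbeta n m x <= (n + m - 1)`!%:R / ((n - 1)`!%:R * (m - 1)`!%:R).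
Proof.
move=> x0 x1; rewrite /fbeta -mulrA.
rewrite -[leRHS]mulr1 ler_wpM2l ?divr_ge0 ?mulr_ge0 ?ler0n //.
rewrite mulr_ile1 ?exprn_ge0 ?subr_ge0 ?exprn_ile1 ?subr_ge0 //; lra.
Qed.

Lemma Lf_ge0 (R : realType) n0 r (y s x : R) : 0 <= s -> 0 <= y -> x <= 1 ->
  0 <= Lf n0 r y s x.
Proof.
move=> s0 y0 x1; rewrite /Lf mulr_ge0 ?expR_ge0 // sumr_ge0 // => i _.
by rewrite mulr_ge0 ?ccoef_ge0 // exprn_ge0 // !mulr_ge0 // subr_ge0.
Qed.

Lemma Lf_anti (R : realType) n0 r (y s x1 x2 : R) : 0 <= s -> 0 <= y ->
  x1 <= x2 -> x2 <= 1 -> Lf n0 r y s x2 <= Lf n0 r y s x1.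
Proof.
move=> s0 y0 x12 x21; rewrite /Lf.
have sy : 0 <= s * y by rewrite mulr_ge0.
apply: ler_pM.
- exact: expR_ge0.
- rewrite sumr_ge0 // => i _.
  by rewrite mulr_ge0 ?ccoef_ge0 // exprn_ge0 // !mulr_ge0 // subr_ge0.
- rewrite ler_expR lerN2; nra.
- apply: ler_sum => i _; rewrite ler_wpM2l ?ccoef_ge0 //.
  rewrite lerXn2r // ?nnegrE ?mulr_ge0 ?subr_ge0 //; try lra.
  nra.
Qed.

Lemma gdens_meas (R : realType) n0 r (y s : R) :
  measurable_fun [set: R] (gdens n0 r y s).
Proof.
rewrite /gdens /fbeta.
apply: measurable_funM; [apply: measurable_funM|].
- apply: measurable_funM; [apply: measurable_funM|].
  + exact: measurable_cst.
  + by apply: measurable_funX.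
  + by apply: measurable_funX; apply: measurable_funB.
- apply: measurableT_comp => //; apply: measurable_funN.
  apply: measurable_funM => //; apply: measurable_funM => //.
- apply: measurable_sum => k; apply: measurable_funM => //.
  apply: measurable_funX; apply: measurable_funM => //.
  exact: measurable_funB.
Qed.

Lemma thr_meas (R : realType) (eta : R) : measurable_fun [set: R] (thr_test eta).
Proof.
rewrite /thr_test; apply: measurable_fun_ifT => //.
exact: measurable_fun_ltr.
Qed.

Theorem mainTheorem7 (R : realType) (N t r K : nat) (y : R) :
  (2 <= N)%N -> (1 <= t)%N -> (1 <= r)%N -> (t + r < N)%N -> (N <= K)%N ->
  0 < y -> y <= 1 ->
  let n0 := n0_of K N t in
  (* monotone likelihood ratio on (0,1] *)
  (forall s : R, 0 < s ->
     {in `]0, 1] &, forall x1 x2 : R, x1 <= x2 ->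
        gdens n0 r y s x2 / gdens n0 r y 0 x2
        <= gdens n0 r y s x1 / gdens n0 r y 0 x1})
  /\
  (* UMP: for each threshold eta, the test [p1 < eta] has maximal power
     under every s > 0 among all (randomized) tests of no larger size *)
  (forall (eta : R), 0 < eta -> eta <= 1 ->
   forall phi : R -> R,
     measurable_fun (`]0%R, 1%R]%classic : set R) phi ->
     {in `]0, 1], forall x, 0 <= phi x <= 1} ->
     (\int[lebesgue_measure]_(x in (`]0%R, 1%R]%classic : set R)) (phi x * gdens n0 r y 0 x)%:E
       <= \int[lebesgue_measure]_(x in (`]0%R, 1%R]%classic : set R)) (thr_test eta x * gdens n0 r y 0 x)%:E)%E ->
     forall s : R, 0 < s ->
     (\int[lebesgue_measure]_(x in (`]0%R, 1%R]%classic : set R)) (phi x * gdens n0 r y s x)%:E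
       <= \int[lebesgue_measure]_(x in (`]0%R, 1%R]%classic : set R)) (thr_test eta x * gdens n0 r y s x)%:E)%E).
Proof.
move=> _ _ _ _ _ y0 y1 n0; split.
  move=> s s0 x1 x2 X1 X2.
move: X1 X2; rewrite !in_setE /= !in_itv /= => /andP[x10 x11] /andP[x20 x21] x12.
  rewrite (gdensE _ _ _ _ s x1) (gdensE _ _ _ _ s x2) !gdens0.
  have Hs : 0 <= s by lra.
  have Hy : 0 <= y by lra.
  have [->|nz2] := eqVneq (fbeta n0 r x2) 0.
    have f1 : 0 <= fbeta n0 r x1 by apply: fbeta_ge0; lra.
    have L1 : 0 <= Lf n0 r y s x1 by apply: Lf_ge0.
    by rewrite mul0r mul0r divr_ge0 // mulr_ge0.
  have nz1 : fbeta n0 r x1 != 0.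
    have [lt1|] := ltP x1 1.
      by rewrite gt_eqF // fbeta_gt0.
    move=> ge1; have e1 : x1 = 1 by lra.
    have e2 : x2 = 1 by lra.
    by rewrite e1 -e2.
  rewrite [fbeta n0 r x2 * _]mulrC [fbeta n0 r x1 * _]mulrC !mulfK //.
  exact: Lf_anti.
move=> eta eta0 eta1 phi mphi phi01 hsize s s0.
have Hs : 0 <= s by lra.
have Hy : 0 <= y by lra.
set D := (`]0%R, 1%R]%classic : set R).
have mD : measurable D by exact: measurable_itv.
have Dx x : D x -> 0 < x /\ x <= 1.
  by rewrite /D /= in_itv /= => /andP.
have mg s' : measurable_fun D (gdens n0 r y s').
  apply: (measurable_funS measurableT) => //; exact: gdens_meas.
have mT : measurable_fun D (thr_test eta).
  apply: (measurable_funS measurableT) => //; exact: thr_meas.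
have phiD x : D x -> 0 <= phi x <= 1 by move=> Dx'; apply: phi01; rewrite inE.
have T01 x : 0 <= thr_test eta x <= 1.
  by rewrite /thr_test; case: ifP => _; rewrite ?lexx ?ler01.
set k := Lf n0 r y s eta.
have k0 : 0 <= k by apply: Lf_ge0.
have g0ge x : D x -> 0 <= gdens n0 r y 0 x.
  by move=> /Dx [x0 x1]; rewrite gdens0 fbeta_ge0 //; lra.
have gsge x : D x -> 0 <= gdens n0 r y s x.
  move=> Dx'; have [x0 x1] := Dx x Dx'.
  by rewrite gdensE mulr_ge0 //; [apply: fbeta_ge0; lra| apply: Lf_ge0].
have pw x : D x -> phi x * gdens n0 r y s x + k * (thr_test eta x * gdens n0 r y 0 x)
    <= thr_test eta x * gdens n0 r y s x + k * (phi x * gdens n0 r y 0 x).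
  move=> Dx'; have f0 := g0ge x Dx'.
  have /andP[p0 p1] := phiD x Dx'.
  have [x0 x1] := Dx x Dx'.
  rewrite gdensE -(gdens0 _ n0 r y x).
  rewrite /thr_test; case: ifPn => hx.
    have Lx : k <= Lf n0 r y s x by apply: Lf_anti => //; lra.
    have h : 0 <= (1 - phi x) * (Lf n0 r y s x - k) * gdens n0 r y 0 x.
      by apply: mulr_ge0 => //; apply: mulr_ge0; rewrite subr_ge0.
    nra.
  rewrite -leNgt in hx.
  have Lx : Lf n0 r y s x <= k by apply: Lf_anti.
  have h : 0 <= phi x * (k - Lf n0 r y s x) * gdens n0 r y 0 x.
    by apply: mulr_ge0 => //; apply: mulr_ge0; rewrite ?subr_ge0.
  nra.
set g0 := gdens n0 r y 0.
set gs := gdens n0 r y s.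
set T := thr_test eta.
have mprod (f g : R -> R) : measurable_fun D f -> measurable_fun D g ->
    measurable_fun D (fun x => (f x * g x)%:E).
  by move=> mf mgg; apply/measurable_EFinP; exact: measurable_funM.
have split (f1 f2 : R -> R) : (forall x, D x -> 0 <= f1 x) -> (forall x, D x -> 0 <= f2 x) ->
    measurable_fun D f1 -> measurable_fun D f2 ->
    (\int[lebesgue_measure]_(x in D) (f1 x + k * f2 x)%:E =
     \int[lebesgue_measure]_(x in D) (f1 x)%:E + k%:E * \int[lebesgue_measure]_(x in D) (f2 x)%:E)%E.
  move=> f10 f20 mf1 mf2.
  rewrite -ge0_integralZl_EFin //.
  rewrite -ge0_integralD //.
  all: try by apply/measurable_EFinP.
  all: try by apply: measurable_funeM; apply/measurable_EFinP.
  by move=> x Dx'; rewrite mule_ge0 // lee_fin ?f20.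
have fin0 : (\int[lebesgue_measure]_(x in D) (T x * g0 x)%:E)%E \is a fin_num.
  have g0le x : D x -> T x * g0 x <= (n0 + r - 1)`!%:R / ((n0 - 1)`!%:R * (r - 1)`!%:R).
    move=> Dx'; have [x0 x1] := Dx x Dx'.
    have := @fbeta_le R n0 r x (ltW x0) x1.
    have /andP[t0 t1] := T01 x.
    have := g0ge x Dx'.
    rewrite /T /g0 gdens0 => h1 h2; nra.
  rewrite ge0_fin_numE; last first.
    by apply: integral_ge0 => x Dx'; rewrite lee_fin mulr_ge0 // ?g0ge //; case/andP: (T01 x).
  apply: (le_lt_trans (y := (\int[lebesgue_measure]_(x in D)
       (cst ((n0 + r - 1)`!%:R / ((n0 - 1)`!%:R * (r - 1)`!%:R))%:E x))%E)).
    apply: ge0_le_integral => //.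
    all: try by move=> x Dx'; rewrite lee_fin mulr_ge0 // ?g0ge //; case/andP: (T01 x).
    all: try by apply: mprod.
    all: try by move=> x Dx'; rewrite lee_fin g0le.
    exact: (mprod T g0 mT (mg 0)).
  rewrite (@integral_cst _ _ _ lebesgue_measure D mD) /D.
  have h1 : lebesgue_measure (`]0%R, 1%R]%classic : set R) = 1%E.
    by rewrite lebesgue_measure_itv /= lte01 EFinN sube0.
  rewrite [X in (_ * X < _)%E](_ : _ = 1%E); first by rewrite mule1 ltry.
  exact: h1.
have nn x : D x -> [/\ 0 <= phi x, 0 <= T x, 0 <= gs x & 0 <= g0 x].
  move=> Dx'; have /andP[? _] := phiD x Dx'; have /andP[? _] := T01 x.
  by split => //; [exact: gsge | exact: g0ge].
have mgs : measurable_fun D gs := mg s.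
have mg0 : measurable_fun D g0 := mg 0.
have mE (f : R -> R) : measurable_fun D f -> measurable_fun D (fun x => (f x)%:E).
  by move=> mf; apply/measurable_EFinP.
have I1 : (\int[lebesgue_measure]_(x in D) (phi x * gs x + k * (T x * g0 x))%:E <=
           \int[lebesgue_measure]_(x in D) (T x * gs x + k * (phi x * g0 x))%:E)%E.
  apply: ge0_le_integral => //.
  - move=> x Dx'; have [a1 a2 a3 a4] := nn x Dx'.
    rewrite lee_fin; apply: addr_ge0; first exact: mulr_ge0.
    by apply: mulr_ge0 => //; exact: mulr_ge0.
  - apply: mE; apply: measurable_funD => //; first exact: measurable_funM.
    apply: measurable_funM => //; exact: measurable_funM.
  - apply: mE; apply: measurable_funD => //; first exact: measurable_funM.
    apply: measurable_funM => //; exact: measurable_funM.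
rewrite (split (fun x => phi x * gs x) (fun x => T x * g0 x)) in I1; first last.
- exact: measurable_funM.
- exact: measurable_funM.
- by move=> x Dx'; have [a1 a2 a3 a4] := nn x Dx'; rewrite mulr_ge0.
- by move=> x Dx'; have [a1 a2 a3 a4] := nn x Dx'; rewrite mulr_ge0.
rewrite (split (fun x => T x * gs x) (fun x => phi x * g0 x)) in I1; first last.
- exact: measurable_funM.
- exact: measurable_funM.
- by move=> x Dx'; have [a1 a2 a3 a4] := nn x Dx'; rewrite mulr_ge0.
- by move=> x Dx'; have [a1 a2 a3 a4] := nn x Dx'; rewrite mulr_ge0.
rewrite -(@leeD2rE _ (k%:E * \int[lebesgue_measure]_(x in D) (T x * g0 x)%:E)%E); last first.
  by rewrite fin_numM.
apply: (le_trans I1); apply: leeD2l; apply: lee_wpmul2l.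
  by rewrite lee_fin.
exact: hsize.
Qed.
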